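(* In each of the categories $\mathsf{Top}$, $\mathsf{Haus}$, $\mathsf{Top}_1$ and $\mathsf{Top}_0$, an object is finitely generated if, and only if, it is finitely small with respect to monomorphisms; and an object is finitely generated with respect to open embeddings if, and only if, it is finitely small with respect to open embeddings.
   Context: $\mathsf{Haus}$, $\mathsf{Top}_1$, $\mathsf{Top}_0$ are the full subcategories of $\mathsf{Top}$ of Hausdorff, T$_1$- and T$_0$-spaces. An open embedding is an injective continuous open map. For a class $\mathcal{M}$ of monomorphisms of a category $\mathcal{C}$, an object $X$ is finitely generated w.r.t. $\mathcal{M}$ if for every directed diagram $(Z_i)_{i\in I}$ (indexed by a directed poset, i.e. every finite subset has an upper bound) with connecting morphisms $z_{i,j}$ in $\mathcal{M}$ and colimit cocone $c_i:Z_i\to Z$ in $\mathcal{C}$, every morphism $f:X\to Z$ factorizes as $f=c_i\cdot g$ for some $i$ and $g:X\to Z_i$, and if also $f=c_i\cdot g'$ then $z_{i,j}\cdot g=z_{i,j}\cdot g'$ for some connecting morphism $z_{i,j}$. ''Finitely generated'' means finitely generated w.r.t. all monomorphisms. $X$ is finitely small w.r.t. $\mathcal{M}$ if the same is required only for continuous chains with connecting morphisms in $\mathcal{M}$, i.e. diagrams $D:\alpha\to\mathcal{C}$ indexed by a limit ordinal $\alpha$ such that for every limit ordinal $j<\alpha$, $D(j)$ is the colimit of the restriction of $D$ to $\{i:i<j\}$. *)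

(* Defs.v *)
From HB Require Import structures.
From mathcomp Require Import all_boot all_order.
From mathcomp Require Import all_classical topology.
From Stdlib Require List.
Set Implicit Arguments. Unset Strict Implicit. Unset Printing Implicit Defensive.
Local Open Scope classical_set_scope.

(** The four categories: full subcategories of Top. *)
Inductive spcat := TopC | HausC | Top1C | Top0C.

Definition obj (C : spcat) (X : topologicalType) : Prop :=
  match C with
  | TopC => True
  | HausC => hausdorff_space X
  | Top1C => accessible_space X
  | Top0C => kolmogorov_space X
  end.

Definition morclass := forall (A B : topologicalType), (A -> B) -> Prop.

Definition mono (C : spcat) : morclass := fun A B f =>
  continuous f /\
  forall (D : topologicalType), obj C D -> forall g h : D -> A,
    continuous g -> continuous h -> f \o g = f \o h -> g = h.

Definition open_embedding : morclass := fun A B f =>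
  [/\ injective f, continuous f & forall U : set A, open U -> open (f @` U)].

Definition diagram (C : spcat) (M : morclass) (I : Type) (le : I -> I -> Prop)
  (Z : I -> topologicalType) (z : forall i j, le i j -> Z i -> Z j) : Prop :=
  [/\ forall i, obj C (Z i),
      forall i j (h : le i j), continuous (z i j h) /\ M _ _ (z i j h),
      forall i (h : le i i), z i i h = id
    & forall i j k (h1 : le i j) (h2 : le j k) (h3 : le i k),
        z j k h2 \o z i j h1 = z i k h3].

Definition is_colimit (C : spcat) (I : Type) (le : I -> I -> Prop)
  (Z : I -> topologicalType) (z : forall i j, le i j -> Z i -> Z j)
  (W : topologicalType) (c : forall i, Z i -> W) : Prop :=
  [/\ obj C W,
      forall i, continuous (c i),
      forall i j (h : le i j), c j \o z i j h = c i
    & forall (V : topologicalType), obj C V ->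
      forall d : forall i, Z i -> V,
        (forall i, continuous (d i)) ->
        (forall i j (h : le i j), d j \o z i j h = d i) ->
        exists! u : W -> V, continuous u /\ forall i, u \o c i = d i].

Definition directed_poset (I : Type) (le : I -> I -> Prop) : Prop :=
  [/\ forall i, le i i,
      forall i j, le i j -> le j i -> i = j,
      forall i j k, le i j -> le j k -> le i k
    & forall l : list I, exists k, forall i, List.In i l -> le i k].

Definition fg_condition (I : Type) (le : I -> I -> Prop)
  (Z : I -> topologicalType) (z : forall i j, le i j -> Z i -> Z j)
  (W : topologicalType) (c : forall i, Z i -> W) (X : topologicalType) : Prop :=
  forall f : X -> W, continuous f ->
    (exists i (g : X -> Z i), continuous g /\ f = c i \o g) /\
    (forall i (g g' : X -> Z i), continuous g -> continuous g' ->
       f = c i \o g -> f = c i \o g' ->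
       exists j (h : le i j), z i j h \o g = z i j h \o g').

Definition fin_generated (C : spcat) (M : morclass) (X : topologicalType) : Prop :=
  forall (I : Type) (le : I -> I -> Prop)
    (Z : I -> topologicalType) (z : forall i j, le i j -> Z i -> Z j)
    (W : topologicalType) (c : forall i, Z i -> W),
    directed_poset le -> diagram C M z -> is_colimit C z c ->
    fg_condition z c X.

(** A limit ordinal alpha, represented (up to isomorphism) as the
    well-ordered set of ordinals below it: a nonempty well-order
    without a greatest element. *)
Definition strict (I : Type) (le : I -> I -> Prop) (i j : I) := le i j /\ i <> j.

Definition limit_ordinal_type (I : Type) (le : I -> I -> Prop) : Prop :=
  (forall i, le i i) /\
  (forall i j, le i j -> le j i -> i = j) /\
  (forall i j k, le i j -> le j k -> le i k) /\
  (forall i j, le i j \/ le j i) /\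
  well_founded (strict le) /\
  (exists i : I, True) /\
  (forall i, exists j, strict le i j).

(** j is a limit ordinal (nonzero, not a successor) inside the chain. *)
Definition is_limit_elt (I : Type) (le : I -> I -> Prop) (j : I) : Prop :=
  (exists i, strict le i j) /\
  (forall i, strict le i j -> exists k, strict le i k /\ strict le k j).

Definition below (I : Type) (le : I -> I -> Prop) (j : I) := {i : I | strict le i j}.
Definition le_below (I : Type) (le : I -> I -> Prop) (j : I)
  (a b : below le j) : Prop := le (proj1_sig a) (proj1_sig b).

Definition continuous_chain (C : spcat) (I : Type) (le : I -> I -> Prop)
  (Z : I -> topologicalType) (z : forall i j, le i j -> Z i -> Z j) : Prop :=
  forall j, is_limit_elt le j ->
    is_colimit C
      (I := below le j) (le := @le_below I le j)
      (Z := fun a => Z (proj1_sig a))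
      (fun a b (h : le_below a b) => z (proj1_sig a) (proj1_sig b) h)
      (W := Z j)
      (fun a => z (proj1_sig a) j (proj1 (proj2_sig a))).

Definition fin_small (C : spcat) (M : morclass) (X : topologicalType) : Prop :=
  forall (I : Type) (le : I -> I -> Prop)
    (Z : I -> topologicalType) (z : forall i j, le i j -> Z i -> Z j)
    (W : topologicalType) (c : forall i, Z i -> W),
    limit_ordinal_type le -> diagram C M z -> continuous_chain C z ->
    is_colimit C z c ->
    fg_condition z c X.

(* Main.v *)
Require Import Defs.
From HB Require Import structures.
From mathcomp Require Import all_boot all_order.
From mathcomp Require Import all_classical topology.
From Stdlib Require List.
From mathcomp Require wochoice finmap.
Set Implicit Arguments. Unset Strict Implicit. Unset Printing Implicit Defensive.
Local Open Scope classical_set_scope.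

Record topax (Y : Type) (op : set (set Y)) : Prop := TopAx {
  ax_T : op setT;
  ax_I : forall A B, op A -> op B -> op (A `&` B);
  ax_U : forall (I : Type) (f : I -> set Y), (forall i, op (f i)) -> op (\bigcup_i f i) }.

Definition mkTop (Y : Type) (op : set (set Y)) (H : topax op) : Type := Y.
HB.instance Definition _ Y op H := gen_eqMixin (@mkTop Y op H).
HB.instance Definition _ Y op H := gen_choiceMixin (@mkTop Y op H).
HB.instance Definition _ Y op H := isOpenTopological.Build (@mkTop Y op H)
  (ax_T H) (ax_I H) (@ax_U _ _ H).

Lemma mkTop_open Y op (H : topax op) (A : set (@mkTop Y op H)) : open A = op A.
Proof. reflexivity. Qed.

Lemma open_local (T : topologicalType) (A : set T) :
  (forall x, A x -> exists B, [/\ open B, B x & B `<=` A]) -> open A.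
Proof.
move=> HA; rewrite openE => x /HA [B [oB Bx BA]].
rewrite /interior nbhsE; exists B => //.
Qed.

Lemma open_nbhsP (T : topologicalType) (A : set T) (x : T) :
  nbhs x A -> exists B, [/\ open B, B x & B `<=` A].
Proof. by rewrite nbhsE => -[B [oB Bx] BA]; exists B. Qed.

Lemma contP (S T : topologicalType) (f : S -> T) :
  (forall A, open A -> open (f @^-1` A)) -> continuous f.
Proof. by move=> H; apply/continuousP. Qed.

Lemma cst_cont (S T : topologicalType) (y : T) : continuous (fun _ : S => y).
Proof.
apply: contP => A oA; apply: open_local => x /= Ay.
by exists setT; split => //; exact: openT.
Qed.

Lemma pt_ax : topax (fun _ : set unit => True).
Proof. by split. Qed.
Definition PT := mkTop pt_ax.

Lemma obj_PT C : obj C PT.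
Proof.
have E (p q : PT) : p = q by case: p; case: q.
case: C => /=; try by [].
- by move=> p q; rewrite (E p q) eqxx.
- by move=> p q; rewrite (E p q) eqxx.
Qed.

Lemma mono_inj C (A B : topologicalType) (f : A -> B) : mono C f -> injective f.
Proof.
move=> [_ Hm] a b fab.
have := Hm PT (obj_PT C) (fun _ => a) (fun _ => b) (@cst_cont _ _ a) (@cst_cont _ _ b).
move=> /(_ _)/(congr1 (fun g => g tt)); apply.
by apply: funext => u /=; rewrite fab.
Qed.

Lemma inj_mono C (A B : topologicalType) (f : A -> B) :
  continuous f -> injective f -> mono C f.
Proof.
move=> cf fi; split => // D _ g h _ _ E; apply: funext => x.
by apply: fi; exact: (congr1 (fun k => k x) E).
Qed.

Lemma oe_mono C (A B : topologicalType) (f : A -> B) :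
  open_embedding f -> mono C f.
Proof. by case=> fi cf _; exact: inj_mono. Qed.

Lemma obj_inj C (S T : topologicalType) (e : S -> T) :
  continuous e -> injective e -> obj C T -> obj C S.
Proof.
move=> ce ie; case: C => //=.
- rewrite !open_hausdorff => HT x y xy.
  have exy : e x != e y by apply: contra xy => /eqP /ie ->.
  have [[A B] /= [xA yB] [oA oB AB0]] := HT _ _ exy.
  exists (e @^-1` A, e @^-1` B) => /=.
    by split; rewrite inE /=; apply/set_mem.
  move/continuousP : ce => ce.
  split; [exact: ce|exact: ce|].
  apply/eqP; rewrite -preimage_setI; move/eqP: AB0 => ->; exact: preimage_set0.
- move=> HT x y xy.
  have exy : e x != e y by apply: contra xy => /eqP /ie ->.
  have [A [oA xA yA]] := HT _ _ exy.
  exists (e @^-1` A); split.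
  + by move/continuousP : ce; apply.
  + by rewrite inE; apply/set_mem.
  + by rewrite inE /=; move: yA; rewrite inE.
- move=> HT x y xy.
  have exy : e x != e y by apply: contra xy => /eqP /ie ->.
  have [A [[nA yA]|[nA xA]]] := HT _ _ exy.
  + exists (e @^-1` A); left; split.
      by rewrite inE; apply: ce; move: nA; rewrite inE.
    by rewrite inE /=; move: yA; rewrite inE.
  + exists (e @^-1` A); right; split.
      by rewrite inE; apply: ce; move: nA; rewrite inE.
    by rewrite inE /=; move: xA; rewrite inE.
Qed.

Lemma lot_directed (I : Type) (le : I -> I -> Prop) :
  limit_ordinal_type le -> directed_poset le.
Proof.
move=> [refl [anti [trans [tot [wf [[i0 _] nomax]]]]]].
split => // l; elim: l => [|a l [k Hk]]; first by exists i0.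
have [ak|ka] := tot a k.
- exists k => i /= [<-|/Hk] //.
- exists a => i /= [<-|/Hk ik] //; exact: trans ik ka.
Qed.

Lemma gen_small C M (X : topologicalType) :
  fin_generated C M X -> fin_small C M X.
Proof.
move=> H I le Z z W c lo D _ L; apply: H => //; exact: lot_directed.
Qed.

Lemma empty_gen C M (X : topologicalType) : (X -> False) -> fin_generated C M X.
Proof.
move=> Xe I le Z z W c [refl _ _ ub] _ _ f _; split.
- have [k _] := ub nil; exists k, (fun x => match Xe x with end); split.
    by move=> x; case: (Xe x).
  by apply: funext => x; case: (Xe x).
- move=> i g g' _ _ _ _; exists i, (refl i).
  by apply: funext => x; case: (Xe x).
Qed.

Lemma sig_eq (A : Type) (P : A -> Prop) (a b : {x | P x}) : sval a = sval b -> a = b.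
Proof. by move=> E; apply: eq_sig_hprop => // x p q; exact: Prop_irrelevance. Qed.

Section SubT.
Variables (X : topologicalType) (S : set X).
Definition subop (U : set {x : X | S x}) :=
  forall p, U p -> exists P, [/\ open P, P (sval p) & forall q, P (sval q) -> U q].
Lemma subax : topax subop.
Proof.
split.
- by move=> p _; exists setT; split => //; exact: openT.
- move=> A B oA oB p [/oA [P [oP Pp PA]] /oB [Q [oQ Qp QB]]].
  exists (P `&` Q); split => //; first exact: openI.
  by move=> q [/PA ? /QB ?].
- move=> I f hf p [i _ fip]; have [P [oP Pp Pf]] := hf i p fip.
  by exists P; split => // q /Pf fq; exists i.
Qed.
Definition SubT := mkTop subax.
Lemma subT_openP (U : set SubT) : open U <-> subop U.
Proof. by []. Qed.
Lemma sval_cont : continuous (sval : SubT -> X).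
Proof.
by apply: contP => A oA; move=> p Ap; exists A; split.
Qed.
Lemma sval_inj : injective (sval : SubT -> X).
Proof. by move=> a b; exact: sig_eq. Qed.
Lemma sval_open : open S -> forall U : set SubT, open U -> open (sval @` U).
Proof.
move=> oS U /subT_openP oU; apply: open_local => _ [p Up <-].
have [P [oP Pp PU]] := oU p Up.
exists (P `&` S); split; [exact: openI| |].
- by split => //; case: (p).
- move=> y [Py Sy]; exists (exist _ y Sy) => //; exact: PU.
Qed.
Lemma obj_SubT C : obj C X -> obj C SubT.
Proof. exact: obj_inj sval_cont sval_inj. Qed.
End SubT.

Definition incl (X : topologicalType) (S S' : set X) (h : S `<=` S') :
  SubT S -> SubT S' := fun p => exist _ (sval p) (h _ (svalP p)).

Lemma incl_cont (X : topologicalType) (S S' : set X) (h : S `<=` S') :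
  continuous (incl h).
Proof.
apply: contP => U /subT_openP oU; apply/subT_openP => p Up.
have [P [oP Pp PU]] := oU _ Up.
by exists P; split => // q Pq; apply: PU.
Qed.

Lemma incl_inj (X : topologicalType) (S S' : set X) (h : S `<=` S') :
  injective (incl h).
Proof.
move=> [a Ha] [b Hb] E; apply: sig_eq => /=.
by move: E; rewrite /incl /= => -[].
Qed.

Lemma incl_open (X : topologicalType) (S S' : set X) (h : S `<=` S') :
  open S -> forall U : set (SubT S), open U -> open (incl h @` U).
Proof.
move=> oS U /subT_openP oU; apply/subT_openP => _ [p Up <-].
have [P [oP Pp PU]] := oU p Up.
exists (P `&` S); split; [exact: openI| |].
- by split => //; case: (p).
- move=> q [Pq Sq]; exists (exist _ (sval q) Sq); first exact: PU.
  by apply: sig_eq.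
Qed.

Lemma incl_oe (X : topologicalType) (S S' : set X) (h : S `<=` S') :
  open S -> open_embedding (incl h).
Proof.
by move=> oS; split; [exact: incl_inj|exact: incl_cont|exact: incl_open].
Qed.

Lemma glue C (I : Type) (le : I -> I -> Prop) (Z : I -> topologicalType)
  (z : forall i j, le i j -> Z i -> Z j) (W : topologicalType)
  (c : forall i, Z i -> W) :
  obj C W -> (forall i, continuous (c i)) ->
  (forall i j (h : le i j), c j \o z i j h = c i) ->
  (forall i (O : set (Z i)), open O -> open (c i @` O)) ->
  (forall w, exists i a, w = c i a) ->
  (forall i j a b, c i a = c j b ->
     exists k (h1 : le i k) (h2 : le j k), z i k h1 a = z j k h2 b) ->
  is_colimit C z c.
Proof.
move=> oW cc cz co cov R; split => // V oV d dc dz.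
have wd i j a b : c i a = c j b -> d i a = d j b.
  move=> /R [k [h1 [h2 E]]].
  by rewrite -(dz _ _ h1) -(dz _ _ h2) /= E.
pose pk w := cid (cov w).
pose pa w := cid (svalP (pk w)).
pose u w := d (sval (pk w)) (sval (pa w)).
have uc i a : u (c i a) = d i a.
  by rewrite /u; apply: wd; rewrite -(svalP (pa (c i a))).
exists u; split.
- split.
  + apply: contP => O oO.
    have -> : u @^-1` O = \bigcup_i (c i @` (d i @^-1` O)).
      apply/seteqP; split.
      * move=> w Ow; exists (sval (pk w)) => //.
        by exists (sval (pa w)) => //; rewrite -(svalP (pa w)).
      * by move=> w [i _ [a Oa <-]]; rewrite /= uc.
    apply: bigcup_open => i _; apply: co.
    by move/continuousP : (dc i); apply.
  + by move=> i; apply: funext => a /=; exact: uc.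
- move=> u' [_ Hu']; apply: funext => w.
  have [i [a ->]] := cov w.
  by rewrite uc -(Hu' i).
Qed.

Definition nle (m n : nat) : Prop := (m <= n)%N.

Lemma wf_nat_strict : well_founded (strict nle).
Proof.
move=> n; elim: n {-2}n (leqnn n) => [|n IH] m Hm; constructor => k [km kneq].
- exfalso; move: Hm km kneq; rewrite /nle leqn0 => /eqP ->.
  by rewrite leqn0 => /eqP.
- apply: IH; have km' : (k < m)%N by rewrite ltn_neqAle km andbT; apply/eqP.
  by rewrite -ltnS; exact: leq_trans km' Hm.
Qed.

Lemma nat_lot : limit_ordinal_type nle.
Proof.
split; first exact: leqnn.
split; first by move=> i j ij ji; apply/eqP; rewrite eqn_leq ij ji.
split; first by move=> i j k; exact: leq_trans.
split; first by move=> i j; rewrite /nle; case: (leqP i j) => h; [left|right; exact: ltnW].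
split; first exact: wf_nat_strict.
split; first by exists 0%N.
move=> i; exists i.+1; split; first exact: leqnSn.
by move=> /eqP; rewrite eqn_leq ltnn andbF.
Qed.

Lemma nat_cc C (Z : nat -> topologicalType) (z : forall i j, nle i j -> Z i -> Z j) :
  continuous_chain C z.
Proof.
move=> j [[i [ij ineq]] H]; exfalso.
have j0 : (0 < j)%N.
  by case: j ij ineq {H} => // ; rewrite /nle leqn0 => /eqP ->.
have [|k [[k1 k2] [k3 k4]]] := H j.-1.
  split; first exact: leq_pred.
  by case: (j) j0 => // n _ /=; rewrite eqn_leq ltnn andbF.
have : (j.-1 < k)%N by rewrite ltn_neqAle k1 andbT; apply/eqP.
have : (k < j)%N by rewrite ltn_neqAle k3 andbT; apply/eqP.
by move=> a b; move: (leq_ltn_trans b a); rewrite prednK // ltnn.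
Qed.

(* chains of topologies on a fixed carrier *)
Section Chain.
Variables (C : spcat) (Y : Type) (op : nat -> set (set Y)).
Hypothesis H : forall n, topax (op n).
Hypothesis Hdec : forall n m U, (n <= m)%N -> op m U -> op n U.
Definition ZC (n : nat) : topologicalType := mkTop (H n).
Definition zid (i j : nat) (h : nle i j) : ZC i -> ZC j := fun y => y.

Lemma chain_diag : (forall n, obj C (ZC n)) -> diagram C (mono C) zid.
Proof.
move=> oZ; split => //.
move=> i j h; have c : continuous (zid h).
  by apply: contP => U oU; exact: Hdec h oU.
by split => //; apply: inj_mono.
Qed.

Lemma chain_colim (Wt : topologicalType) (c : Y -> Wt) :
  obj C Wt -> (forall n U, open U -> op n (c @^-1` U)) ->
  (forall U : set Wt, (forall n, op n (c @^-1` U)) -> open U) ->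
  (forall w, exists y, c y = w) ->
  (forall V : topologicalType, obj C V -> forall d : Y -> V,
     (forall n O, open O -> op n (d @^-1` O)) -> forall y y', c y = c y' -> d y = d y') ->
  is_colimit C zid (fun n => (c : ZC n -> Wt)).
Proof.
move=> oW cc cq cs cd; split => //.
- by move=> n; apply: contP => U oU; exact: cc.
- move=> V oV d dc dz.
  have dn n : (d n : Y -> V) = d 0%N.
    by have := dz 0%N n (leq0n n).
  pose e : Y -> V := d 0%N.
  have ec n O : open O -> op n (e @^-1` O).
    by move=> oO; rewrite /e -(dn n); move/continuousP : (dc n); apply.
  pose u w := e (sval (cid (cs w))).
  have uc y : u (c y) = e y.
    apply: (cd V oV e ec); exact: (svalP (cid (cs (c y)))).
  exists u; split.
  + split.
    * apply: contP => O oO; apply: cq => n.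
      have -> : c @^-1` (u @^-1` O) = e @^-1` O.
        by apply/seteqP; split => y /=; rewrite uc.
      exact: ec.
    * by move=> n; apply: funext => y /=; rewrite uc /e dn.
  + move=> u' [_ Hu']; apply: funext => w.
    have [y <-] := cs w.
    by rewrite uc; have := congr1 (fun k => k y) (Hu' 0%N).
Qed.

Lemma chain_fg (X : topologicalType) (Wt : topologicalType) (c : Y -> Wt) :
  fin_small C (mono C) X ->
  (forall n, obj C (ZC n)) ->
  obj C Wt -> (forall n U, open U -> op n (c @^-1` U)) ->
  (forall U : set Wt, (forall n, op n (c @^-1` U)) -> open U) ->
  (forall w, exists y, c y = w) ->
  (forall V : topologicalType, obj C V -> forall d : Y -> V,
     (forall n O, open O -> op n (d @^-1` O)) -> forall y y', c y = c y' -> d y = d y') ->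
  fg_condition zid (fun n => (c : ZC n -> Wt)) X.
Proof.
move=> Hs oZ oW cc cq cs cd.
apply: Hs; [exact: nat_lot|exact: chain_diag|exact: nat_cc|exact: chain_colim].
Qed.
End Chain.

Lemma topax_all (Y : Type) (op : nat -> set (set Y)) :
  (forall n, topax (op n)) -> topax (fun U => forall n, op n U).
Proof.
move=> H; split.
- by move=> n; exact: (ax_T (H n)).
- by move=> A B oA oB n; apply: (ax_I (H n)).
- by move=> I f hf n; apply: (ax_U (H n)) => i; exact: hf.
Qed.

Lemma open_from_nbhs (T : topologicalType) (A : set T) :
  (forall x, A x -> nbhs x A) -> open A.
Proof. by move=> H; rewrite openE => x /H. Qed.

Lemma collapse_fail (C : spcat) (Y : Type) (op : nat -> set (set Y))
  (H : forall n, topax (op n)) (Wt : topologicalType) (c : Y -> Wt)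
  (X : topologicalType) (x0 : X) (a b : Y) :
  fg_condition (zid (H:=H)) (fun n => (c : ZC H n -> Wt)) X -> a <> b -> c a = c b -> False.
Proof.
move=> Hfg ab cab.
have [_ /(_ 0%N (fun _ => a) (fun _ => b))] := Hfg (fun _ => c a) (@cst_cont _ _ (c a)).
move=> /(_ (@cst_cont _ _ _) (@cst_cont _ _ _) erefl).
rewrite cab => /(_ erefl) [j [h E]].
by apply: ab; have := congr1 (fun k => k x0) E.
Qed.

(* --- Top: non discrete spaces are not finitely small --- *)
Section ND.
Variables (X : topologicalType) (p : X).
Definition NY := (X + nat)%type.
Definition Vp (U : set NY) : set X := fun x => U (inl x).
Definition ndop (n : nat) (U : set NY) : Prop :=
  [/\ forall x, U (inl x) -> x <> p -> nbhs x (Vp U),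
      U (inl p) -> exists k, forall m, (k <= m)%N -> U (inr m)
    & forall m, (m < n)%N -> U (inr m) -> nbhs p (Vp U)].

Lemma ndax n : topax (ndop n).
Proof.
split.
- split => //.
  + by move=> x _ _; apply: (@filterT _ _ (nbhs_filter x)).
  + by exists 0%N.
  + by move=> m _ _; apply: (@filterT _ _ (nbhs_filter p)).
- move=> A B [A1 A2 A3] [B1 B2 B3]; split.
  + move=> x [Ax Bx] xp; have := @filterI _ _ (nbhs_filter x) _ _ (A1 x Ax xp) (B1 x Bx xp).
    by apply: filterS.
  + move=> [/A2 [k1 H1] /B2 [k2 H2]]; exists (maxn k1 k2) => m km; split.
      by apply: H1; exact: leq_trans (leq_maxl _ _) km.
    by apply: H2; exact: leq_trans (leq_maxr _ _) km.
  + move=> m mn [Am Bm]; have := @filterI _ _ (nbhs_filter p) _ _ (A3 m mn Am) (B3 m mn Bm).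
    by apply: filterS.
- move=> I f hf; split.
  + move=> x [i _ fx] xp; have [H1 _ _] := hf i.
    by apply: (@filterS _ _ (nbhs_filter x) _ _ _ (H1 x fx xp)) => y fiy; exists i.
  + move=> [i _ fip]; have [_ /(_ fip) [k Hk] _] := hf i.
    by exists k => m km; exists i => //; exact: Hk.
  + move=> m mn [i _ fim]; have [_ _ H3] := hf i.
    by apply: (@filterS _ _ (nbhs_filter p) _ _ _ (H3 m mn fim)) => y fiy; exists i.
Qed.

Lemma nddec n m U : (n <= m)%N -> ndop m U -> ndop n U.
Proof.
move=> nm [H1 H2 H3]; split => // k kn; apply: H3.
exact: leq_trans kn nm.
Qed.

Definition NW := mkTop (topax_all ndax).

Lemma nd_fg : fin_small TopC (mono TopC) X -> open [set p].
Proof.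
move=> Hs.
have := @chain_fg TopC NY ndop ndax nddec X NW (fun y => y) Hs.
move=> /(_ (fun _ => I) I) /(_ (fun n U oU => oU n) (fun U H => H)).
move=> /(_ (fun w => ex_intro _ w erefl)).
move=> /(_ (fun V _ d _ y y' E => congr1 d E)) Hfg.
have ci : continuous (inl : X -> NW).
  apply: contP => U oU; apply: open_from_nbhs => x Ux.
  have [H1 H2 H3] := oU 0%N.
  have [E|xp] := eqVneq x p; last by apply: H1 => // /eqP; rewrite (negbTE xp).
  subst x.
  have [k Hk] := H2 Ux; have [_ _ H3'] := oU k.+1.
  exact: H3' k (ltnSn k) (Hk k (leqnn k)).
have [[i [g [gc E]]] _] := Hfg _ ci.
have gE : g = inl by rewrite E.
pose U0 : set NY := fun y => match y with inl x => x = p | inr m => (i <= m)%N end.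
have oU0 : @open (ZC ndax i) U0.
  split.
  - by move=> x /= -> [].
  - by move=> _; exists i.
  - by move=> m mi /= im; move: (leq_ltn_trans im mi); rewrite ltnn.
have := (continuousP _).1 gc U0 oU0.
have -> // : g @^-1` U0 = [set p].
by rewrite gE.
Qed.
End ND.

Inductive HY := ha | hb | hg of nat & nat.
Inductive HW := hs | hw of nat & nat.
Definition hop (n : nat) (U : set HY) : Prop :=
  (U ha -> exists k, forall i j, (k <= i)%N -> U (hg i j)) /\
  (U hb -> forall i, (i < n)%N -> exists k, forall j, (k <= j)%N -> U (hg i j)).
Definition hWop (U : set HW) : Prop :=
  U hs -> (exists k, forall i j, (k <= i)%N -> U (hw i j)) /\
          (forall i, exists k, forall j, (k <= j)%N -> U (hw i j)).

Lemma hax n : topax (hop n).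
Proof.
split.
- by split; [move=> _; exists 0%N|move=> _ i _; exists 0%N].
- move=> A B [A1 A2] [B1 B2]; split.
  + move=> [/A1 [k1 H1] /B1 [k2 H2]]; exists (maxn k1 k2) => i j ki; split.
      by apply: H1; exact: leq_trans (leq_maxl _ _) ki.
    by apply: H2; exact: leq_trans (leq_maxr _ _) ki.
  + move=> [Ab Bb] i ilt; have [k1 H1] := A2 Ab i ilt; have [k2 H2] := B2 Bb i ilt.
    exists (maxn k1 k2) => j kj; split.
      by apply: H1; exact: leq_trans (leq_maxl _ _) kj.
    by apply: H2; exact: leq_trans (leq_maxr _ _) kj.
- move=> I f hf; split.
  + move=> [i _ fa]; have [/(_ fa) [k Hk] _] := hf i.
    by exists k => i' j ki; exists i => //; exact: Hk.
  + move=> [i _ fb] i' ilt; have [_ /(_ fb i' ilt) [k Hk]] := hf i.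
    by exists k => j kj; exists i => //; exact: Hk.
Qed.

Lemma hWax : topax hWop.
Proof.
split.
- by move=> _; split; [exists 0%N|move=> i; exists 0%N].
- move=> A B HA HB [/HA [[k1 H1] G1] /HB [[k2 H2] G2]]; split.
  + exists (maxn k1 k2) => i j ki; split.
      by apply: H1; exact: leq_trans (leq_maxl _ _) ki.
    by apply: H2; exact: leq_trans (leq_maxr _ _) ki.
  + move=> i; have [l1 L1] := G1 i; have [l2 L2] := G2 i.
    exists (maxn l1 l2) => j kj; split.
      by apply: L1; exact: leq_trans (leq_maxl _ _) kj.
    by apply: L2; exact: leq_trans (leq_maxr _ _) kj.
- move=> I f hf [i _ fs]; have [[k Hk] G] := hf i fs; split.
  + by exists k => i' j ki; exists i => //; exact: Hk.
  + by move=> i'; have [l L] := G i'; exists l => j lj; exists i => //; exact: L.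
Qed.

Definition hc (y : HY) : HW :=
  match y with ha => hs | hb => hs | hg i j => hw i j end.

Lemma haus_of (T : topologicalType) :
  (forall x y : T, x <> y -> exists A B : set T,
     [/\ open A, open B, A x, B y & forall w, A w -> B w -> False]) ->
  hausdorff_space T.
Proof.
move=> H; rewrite open_hausdorff => x y /eqP /H [A [B [oA oB Ax By AB]]].
exists (A, B) => /=; first by rewrite !inE.
split => //; apply/eqP; apply/seteqP; split => // w [Aw Bw]; exact: AB w Aw Bw.
Qed.

Lemma haus_sym (T : topologicalType) (x y : T) :
  (exists A B : set T, [/\ open A, open B, A x, B y & forall w, A w -> B w -> False]) ->
  (exists A B : set T, [/\ open A, open B, A y, B x & forall w, A w -> B w -> False]).
Proof.
by move=> [A [B [oA oB Ax By AB]]]; exists B, A; split => // w Bw Aw; exact: AB w Aw Bw.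
Qed.

Lemma hZ_haus n : hausdorff_space (ZC hax n).
Proof.
have sep_ab : exists A B : set (ZC hax n), [/\ open A, open B, A ha, B hb
    & forall w, A w -> B w -> False].
  exists (fun y => match y with ha => True | hb => False | hg i _ => (n <= i)%N end).
  exists (fun y => match y with ha => False | hb => True | hg i _ => (i < n)%N end).
  split => //.
  - by split => // _; exists n.
  - by split => // _ i ilt; exists 0%N.
  - by case => // i j /= ni; rewrite ltnNge ni.
have sep_ag i j : exists A B : set (ZC hax n), [/\ open A, open B, A ha, B (hg i j)
    & forall w, A w -> B w -> False].
  exists (fun y => match y with ha => True | hb => False | hg i' _ => (i < i')%N end).
  exists (fun y => y = hg i j).
  split => //.
  - by split => // _; exists i.+1.
  - by move=> w + E; rewrite E ltnn.
have sep_bg i j : exists A B : set (ZC hax n), [/\ open A, open B, A hb, B (hg i j)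
    & forall w, A w -> B w -> False].
  exists (fun y => match y with ha => False | hb => True | hg i' j' => (j < j')%N end).
  exists (fun y => y = hg i j).
  split => //.
  - by split => // _ i' _; exists j.+1.
  - by move=> w + E; rewrite E ltnn.
have sep_gg i j i' j' : hg i j <> hg i' j' -> exists A B : set (ZC hax n),
    [/\ open A, open B, A (hg i j), B (hg i' j') & forall w, A w -> B w -> False].
  move=> ne; exists (fun y => y = hg i j), (fun y => y = hg i' j').
  by split => // w -> E.
apply: haus_of => x y; case: x => [||i j]; case: y => [||i' j'] ne; try by case: ne.
- exact: sep_ab.
- exact: sep_ag.
- exact: haus_sym.
- exact: sep_bg.
- exact: haus_sym.
- exact: haus_sym.
- exact: sep_gg.
Qed.

Definition HWt := mkTop hWax.

Lemma hW_haus : hausdorff_space HWt.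
Proof.
have sep_sw i j : exists A B : set HWt, [/\ open A, open B, A hs, B (hw i j)
    & forall w, A w -> B w -> False].
  exists (fun w => match w with hs => True | hw i' j' => (i < i')%N \/ (j < j')%N end).
  exists (fun w => w = hw i j).
  split => //.
  - move=> _; split; first by exists i.+1 => i' j' ii; left.
    by move=> i'; exists j.+1 => j' jj; right.
  - by move=> w + E; rewrite E !ltnn => -[].
apply: haus_of => x y; case: x => [|i j]; case: y => [|i' j'] ne; try by case: ne.
- exact: sep_sw.
- exact: haus_sym.
- exists (fun w => w = hw i j), (fun w => w = hw i' j').
  by split => // w -> E.
Qed.

Lemma haus_neg (X : topologicalType) (x0 : X) :
  fin_small HausC (mono HausC) X -> False.
Proof.
move=> Hs.
have Hdec : forall n m U, (n <= m)%N -> hop m U -> hop n U.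
  move=> n m U nm [H1 H2]; split => // Ub i ilt; apply: H2 => //.
  exact: leq_trans ilt nm.
have := @chain_fg HausC HY hop hax Hdec X HWt hc Hs hZ_haus hW_haus.
move=> /(_ _ _) Hfg.
have {Hfg} := Hfg _ _ _ _ _.
move=> Hfg; apply: (@collapse_fail HausC HY hop hax HWt hc X x0 ha hb) => //.
apply: Hfg.
- move=> n U oU; split.
  + by move=> /oU [[k Hk] _]; exists k.
  + by move=> /oU [_ G] i _; exact: G.
- move=> U HU; change (hWop U) => Us; split.
  + by have [/(_ Us) [k Hk] _] := HU 0%N; exists k.
  + move=> i; have [_ /(_ Us i (ltnSn i)) [k Hk]] := HU i.+1.
    by exists k.
- by case=> [|i j]; [exists ha|exists (hg i j)].
- move=> V oV d dc.
  have dab : d ha = d hb.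
    apply: oV => A B nA nB.
    have [A' [oA' Aa AA]] := open_nbhsP nA.
    have [B' [oB' Bb BB]] := open_nbhsP nB.
    have [/(_ Aa) [k Hk] _] := dc 0%N A' oA'.
    have [_ /(_ Bb k (ltnSn k)) [l Hl]] := dc k.+1 B' oB'.
    exists (d (hg k l)); split; [apply: AA; exact: Hk|apply: BB; exact: Hl].
  case=> [|| i j]; case=> [|| i' j'] //= E; try by rewrite dab.
  by case: E => -> ->.
Qed.

Inductive TY := ta | tb | tn of nat.
Inductive TW := ws | wn of nat.
Definition top0 (n : nat) (U : set TY) : Prop :=
  [/\ U ta -> exists k, forall m, (k <= m)%N -> U (tn m),
      forall m, (m < n)%N -> U (tn m) -> U tb
    & U tb -> U ta].
Definition tWop (U : set TW) : Prop :=
  (U ws -> exists k, forall m, (k <= m)%N -> U (wn m)) /\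
  (forall m, U (wn m) -> U ws).

Lemma t0ax n : topax (top0 n).
Proof.
split.
- by split => // _; exists 0%N.
- move=> A B [A1 A2 A3] [B1 B2 B3]; split.
  + move=> [/A1 [k1 H1] /B1 [k2 H2]]; exists (maxn k1 k2) => m km; split.
      by apply: H1; exact: leq_trans (leq_maxl _ _) km.
    by apply: H2; exact: leq_trans (leq_maxr _ _) km.
  + by move=> m mn [Am Bm]; split; [exact: A2 m mn Am|exact: B2 m mn Bm].
  + by move=> [Ab Bb]; split; [exact: A3|exact: B3].
- move=> I f hf; split.
  + move=> [i _ fa]; have [/(_ fa) [k Hk] _ _] := hf i.
    by exists k => m km; exists i => //; exact: Hk.
  + move=> m mn [i _ fm]; have [_ H2 _] := hf i.
    by exists i => //; exact: H2 mn fm.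
  + move=> [i _ fb]; have [_ _ H3] := hf i.
    by exists i => //; exact: H3.
Qed.

Lemma tWax : topax tWop.
Proof.
split.
- by split => // _; exists 0%N.
- move=> A B [A1 A2] [B1 B2]; split.
  + move=> [/A1 [k1 H1] /B1 [k2 H2]]; exists (maxn k1 k2) => m km; split.
      by apply: H1; exact: leq_trans (leq_maxl _ _) km.
    by apply: H2; exact: leq_trans (leq_maxr _ _) km.
  + by move=> m [Am Bm]; split; [exact: A2 Am|exact: B2 Bm].
- move=> I f hf; split.
  + move=> [i _ fa]; have [/(_ fa) [k Hk] _] := hf i.
    by exists k => m km; exists i => //; exact: Hk.
  + move=> m [i _ fm]; have [_ H2] := hf i.
    by exists i => //; exact: H2 fm.
Qed.

Definition tc (y : TY) : TW := match y with ta => ws | tb => ws | tn m => wn m end.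

Lemma kolmo_of (T : topologicalType) :
  (forall x y : T, x <> y -> exists A, open A /\ ((A x /\ ~ A y) \/ (A y /\ ~ A x))) ->
  kolmogorov_space T.
Proof.
move=> H x y /eqP /H [A [oA [[Ax nAy]|[Ay nAx]]]]; exists A.
- by left; split; rewrite inE //; apply: open_nbhs_nbhs; split.
- by right; split; rewrite inE //; apply: open_nbhs_nbhs; split.
Qed.

Definition nb (n : nat) (y : TY) : set TY :=
  match y with
  | ta => fun w => match w with ta => True | tb => False | tn m => (n <= m)%N end
  | tb => fun w => match w with ta => True | tb => True | tn m => (n <= m)%N end
  | tn m0 => if (m0 < n)%N then
      (fun w => match w with ta => True | tb => True | tn m => m = m0 \/ (n <= m)%N end)
      else (fun w => w = tn m0)
  end.

Lemma nb_open n y : top0 n (nb n y).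
Proof.
case: y => [||m0] /=.
- split => //; first by move=> _; exists n.
  by move=> m mn nm; move: (leq_ltn_trans nm mn); rewrite ltnn.
- split => //; first by move=> _; exists n.
- case: ifP => mn0.
  + by split => // _; exists n => m nm; right.
  + split; [by move=> E; discriminate E| |by move=> E; discriminate E].
    by move=> m mn [] E; move: mn0; rewrite -E mn.
Qed.

Lemma nb_self n y : nb n y y.
Proof. by case: y => [||m0] //=; case: ifP => _ //; left. Qed.

Lemma nb_sep n x y : x <> y -> ~ nb n x y \/ ~ nb n y x.
Proof.
case: x => [||m]; case: y => [||m'] ne //=; try by [left|right].
- by case: ifP => h; [left; rewrite leqNgt h|right => E; discriminate E].
- by case: ifP => h; [left; rewrite leqNgt h|right => E; discriminate E].
- by case: ifP => h; [right; rewrite leqNgt h|left => E; discriminate E].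
- by case: ifP => h; [right; rewrite leqNgt h|left => E; discriminate E].
- have mm : m <> m' by move=> E; apply: ne; rewrite E.
  case: ifP => h; case: ifP => h'.
  + by left => -[E|]; [apply: mm|rewrite leqNgt h'].
  + by right => -[E]; apply: mm.
  + by left => -[E]; apply: mm.
  + by left => -[E]; apply: mm.
Qed.

Lemma tZ_kolmo n : kolmogorov_space (ZC t0ax n).
Proof.
apply: kolmo_of => x y ne.
have [nx|ny] := nb_sep n ne.
- by exists (nb n x); split; [exact: nb_open|left; split => //; exact: nb_self].
- by exists (nb n y); split; [exact: nb_open|right; split => //; exact: nb_self].
Qed.

Definition TWt := mkTop tWax.

Lemma tW_kolmo : kolmogorov_space TWt.
Proof.
have sw m : exists A : set TWt, open A /\ A ws /\ ~ A (wn m).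
  exists (fun w => match w with ws => True | wn m' => (m < m')%N end).
  split; last by rewrite /= ltnn.
  by split => //; move=> _; exists m.+1.
apply: kolmo_of => x y; case: x => [|m]; case: y => [|m'] ne; try by case: ne.
- by have [A [oA [Aw nA]]] := sw m'; exists A; split => //; left.
- by have [A [oA [Aw nA]]] := sw m; exists A; split => //; right.
- have mm : m <> m' by move=> E; apply: ne; rewrite E.
  exists (fun w => match w with ws => True | wn k => k = m \/ (maxn m m' < k)%N end).
  split.
  + by split => //; move=> _; exists (maxn m m').+1 => k hk; right.
  + left; split; first by left.
    by move=> [E|]; [exact: mm|rewrite ltnNge leq_maxr].
Qed.

Lemma t0_neg (X : topologicalType) (x0 : X) :
  fin_small Top0C (mono Top0C) X -> False.
Proof.
move=> Hs.
have Hdec : forall n m U, (n <= m)%N -> top0 m U -> top0 n U.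
  move=> n m U nm [H1 H2 H3]; split => // k kn; apply: H2.
  exact: leq_trans kn nm.
have := @chain_fg Top0C TY top0 t0ax Hdec X TWt tc Hs tZ_kolmo tW_kolmo.
move=> /(_ _ _) Hfg.
have {Hfg} := Hfg _ _ _ _ _.
move=> Hfg; apply: (@collapse_fail Top0C TY top0 t0ax TWt tc X x0 ta tb) => //.
apply: Hfg.
- move=> n U oU; have [O1 O2] := oU; split.
  + by move=> /O1 [k Hk]; exists k.
  + by move=> m _ /O2.
  + by [].
- move=> U HU; change (tWop U); split.
  + by move=> Us; have [/(_ Us) [k Hk] _ _] := HU 0%N; exists k.
  + move=> m Um; have [_ H2 _] := HU m.+1.
    exact: H2 m (ltnSn m) Um.
- by case=> [|m]; [exists ta|exists (tn m)].
- move=> V oV d dc.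
  have dab : d ta = d tb.
    have [//|ne] := eqVneq (d ta) (d tb).
    have [A [[nA nB]|[nA nB]]] := oV _ _ ne; rewrite !inE in nA nB.
    + have [A' [oA' Aa AA]] := open_nbhsP nA.
      have [/(_ Aa) [k Hk] _ _] := dc 0%N A' oA'.
      have [_ H2 _] := dc k.+1 A' oA'.
      by exfalso; apply: nB; apply: AA; apply: (H2 k (ltnSn k)); exact: Hk.
    + have [A' [oA' Aa AA]] := open_nbhsP nA.
      have [_ _ H3] := dc 0%N A' oA'.
      by exfalso; apply: nB; apply: AA; exact: H3.
  case=> [|| i]; case=> [|| i'] //= E; try by rewrite dab.
  by case: E => ->.
Qed.

(* --- T1: compact infinite spaces are not finitely small --- *)
Lemma avoid_list (X : topologicalType) : accessible_space X ->
  forall (F : seq X) (y : X), exists B : set X,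
    [/\ open B, B y & forall x, List.In x F -> x <> y -> ~ B x].
Proof.
move=> T1; elim=> [|a F IH] y.
  by exists setT; split => //; exact: openT.
have [B [oB By HB]] := IH y.
have [->|ay] := eqVneq a y.
  by exists B; split => // x /= [<-|/HB] //.
have ya : y != a by rewrite eq_sym.
have [A [oA yA aA]] := T1 _ _ ya.
exists (A `&` B); split; [exact: openI| |].
- by split => //; rewrite inE in yA.
- move=> x /= [<- _|xF xy] [Ax Bx].
  + by move: aA; rewrite inE /= => /(_ Ax).
  + exact: HB x xF xy Bx.
Qed.

Lemma list_closed (X : topologicalType) : accessible_space X ->
  forall (F : seq X) (K : set X), (forall x, K x -> List.In x F) -> closed K.
Proof.
move=> T1 F K KF; rewrite -openC; apply: open_local => y nKy.
have [B [oB By HB]] := avoid_list T1 F y.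
exists B; split => // z Bz Kz.
have [zy|zy] := eqVneq z y; first by apply: nKy; rewrite -zy.
by apply: (HB z (KF z Kz)) => // E; move: zy; rewrite E eqxx.
Qed.

Section T1neg.
Variables (X : topologicalType) (T1 : accessible_space X) (cX : compact [set: X]).
Hypothesis Hinf : ~ exists s : seq X, forall x, List.In x s.

Let fresh_ex (l : seq X) : exists x, ~ List.In x l.
Proof.
apply/existsNP => H; apply: Hinf; exists l; exact: H.
Qed.
Let fresh (l : seq X) : X := sval (cid (fresh_ex l)).
Let freshP l : ~ List.In (fresh l) l := svalP (cid (fresh_ex l)).
Fixpoint sq (n : nat) : seq X := if n is n'.+1 then fresh (sq n') :: sq n' else [::].
Let s (n : nat) : X := fresh (sq n).

Let s_in m n : (m < n)%N -> List.In (s m) (sq n).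
Proof.
elim: n => // n IH; rewrite ltnS leq_eqVlt => /orP [/eqP ->|/IH]; first by left.
by move=> h; right.
Qed.

Let s_inj : injective s.
Proof.
move=> m n E; apply/eqP; rewrite eqn_leq; apply/andP; split; rewrite leqNgt; apply/negP => h.
- have := @freshP (sq m); apply; rewrite -/(s m) E; exact: s_in.
- have := @freshP (sq n); apply; rewrite -/(s n) -E; exact: s_in.
Qed.

Let a (m k : nat) : X := s (pickle (m, k)).
Let a_inj m k m' k' : a m k = a m' k' -> m = m' /\ k = k'.
Proof.
move=> /s_inj /(pcan_inj pickleK) [-> ->]; done.
Qed.

Let ycl (m : nat) : exists y, cluster (a m @ \oo) y.
Proof.
have [y [_ Hy]] := cX _ (@filterT _ (a m @ \oo) _).
by exists y.
Qed.
Let y (m : nat) : X := sval (cid (ycl m)).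
Let yP m : cluster (a m @ \oo) (y m) := svalP (cid (ycl m)).

Definition Km (m : nat) : set X := fun x => (exists k, x = a m k) /\ x <> y m.

Let Km_disj m m' x : Km m x -> Km m' x -> m = m'.
Proof.
by move=> [[k ->] _] [[k' /a_inj [-> _]] _].
Qed.

Let Km_nclosed m : ~ closed (Km m).
Proof.
move=> cK.
suff : Km m (y m) by move=> [_].
have FK : (a m @ \oo) (Km m).
  have [[k0 E]|nE] := pselect (exists k0, a m k0 = y m).
  - exists k0.+1 => // k /= kk; split; first by exists k.
    by move=> E'; move: kk; rewrite -E in E'; have [_ ->] := a_inj E'; rewrite ltnn.
  - exists 0%N => // k _; split; first by exists k.
    by move=> E; apply: nE; exists k.
apply: cK => B nB; exact: (@yP m _ _ FK nB).
Qed.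

Definition Jm (P : nat -> Prop) (K : set X) := exists (F : seq X) (N : nat),
  forall x, K x -> List.In x F \/ exists m, [/\ P m, (m < N)%N & Km m x].

Let Jm_sub P K K' : K' `<=` K -> Jm P K -> Jm P K'.
Proof. by move=> KK [F [N H]]; exists F, N => x /KK /H. Qed.

Let Jm_mono (P P' : nat -> Prop) K : (forall m, P m -> P' m) -> Jm P K -> Jm P' K.
Proof.
move=> PP [F [N H]]; exists F, N => x /H [|[m [Pm mN Kx]]]; first by left.
by right; exists m; split => //; exact: PP.
Qed.

Definition kop (P : nat -> Prop) (U : set X) := ~` U = setT \/ Jm P (~` U).

Let kax P : topax (kop P).
Proof.
split.
- by right; exists [::], 0%N => x /=.
- move=> A B [HA|HA] [HB|HB].
  + left; apply/seteqP; split => // x _ [Ax _].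
    by have : (~` A) x by rewrite HA. 
  + left; apply/seteqP; split => // x _ [Ax _].
    by have : (~` A) x by rewrite HA.
  + left; apply/seteqP; split => // x _ [_ Bx].
    by have : (~` B) x by rewrite HB.
  + right; move: HA HB => [F [N HA]] [F' [N' HB]].
    exists (F ++ F'), (maxn N N') => x /= nAB.
    have [Ax|nAx] := pselect (A x).
    * have nBx : ~ B x by move=> Bx; apply: nAB.
      have [|[m [Pm mN Kx]]] := HB x nBx.
        by move=> h; left; apply: List.in_or_app; right.
      by right; exists m; split => //; exact: leq_trans mN (leq_maxr _ _).
    * have [|[m [Pm mN Kx]]] := HA x nAx.
        by move=> h; left; apply: List.in_or_app; left.
      by right; exists m; split => //; exact: leq_trans mN (leq_maxl _ _).
- move=> I f hf.
  have [Hall|] := pselect (forall i, ~` f i = setT).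
  + left; apply/seteqP; split => // x _ [i _ fx].
    by have : (~` f i) x by rewrite Hall.
  + move=> /existsNP [i ni]; have [//|Hi] := hf i.
    by right; apply: Jm_sub Hi => x nx fx; apply: nx; exists i.
Qed.

Let kZ n := kop (fun m => (n <= m)%N).
Let kZax n : topax (kZ n) := kax _.
Definition KWt := mkTop (kax (fun _ => False)).

Let kT1 P : accessible_space (mkTop (kax P)).
Proof.
move=> x x' ne; exists (~` [set x']); split.
- right; exists [:: x'], 0%N => z /= nz; left; left.
  by apply: contrapT => h; apply: nz => E; apply: h; rewrite E.
- by rewrite inE => E; move: ne; rewrite E eqxx.
- by rewrite inE /= => h; apply: h.
Qed.

Lemma t1_neg : fin_small Top1C (mono Top1C) X -> False.
Proof.
move=> Hs.
have Hdec : forall n m U, (n <= m)%N -> kZ m U -> kZ n U.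
  move=> n m U nm [H|H]; [by left|right].
  by apply: Jm_mono H => k mk; exact: leq_trans nm mk.
have := @chain_fg Top1C X kZ kZax Hdec X KWt (fun x => x) Hs (fun n => @kT1 (fun m => (n <= m)%N)) (@kT1 (fun _ => False)).
move=> /(_ _ _) Hfg.
have {Hfg} := Hfg _ _ _ _ _.
move=> Hfg; have {}Hfg := Hfg _ _ (fun w => ex_intro _ w erefl) (fun V _ d _ y y' E => congr1 d E).
have {}Hfg : fg_condition (zid (H:=kZax)) (fun n => ((fun x => x) : ZC kZax n -> KWt)) X.
  apply: Hfg.
  - move=> n U [H|H]; [by left|right].
    by apply: Jm_mono H.
  - move=> U HU; change (kop (fun _ => False) U).
    have [H0|nT] := pselect (~` U = setT); first by left.
    right.
    have Jn n : Jm (fun m => (n <= m)%N) (~` U) by case: (HU n).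
    have [F0 [N0 H0]] := Jn 0%N; have [F1 [N1 H1]] := Jn N0.
    exists (F0 ++ F1), 0%N => x nx.
    left; apply: List.in_or_app.
    have [|[m [_ mN Kx]]] := H0 x nx; first by left.
    have [|[m' [Nm _ Kx']]] := H1 x nx; first by right.
    move: Nm; rewrite (Km_disj Kx' Kx) => Nm.
    by move: (leq_ltn_trans Nm mN); rewrite ltnn.
have ci : continuous ((fun x => x) : X -> KWt).
  apply: contP => U [HU|[F [N HU]]].
  - have -> : (fun x : X => x) @^-1` U = set0.
      by apply/seteqP; split => // x Ux; have : (~` U) x by rewrite HU.
    exact: open0.
  - have : closed (~` U : set X).
      apply: (list_closed T1 (F := F)) => x /HU [//|[m []]] //.
    by rewrite -openC setCK.
have [[i [g [gc E]]] _] := Hfg _ ci.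
have gE : g = (fun x => x) by rewrite E.
have oU0 : @open (ZC kZax i) (~` Km i).
  right; exists [::], i.+1 => x; rewrite setCK => Kx; right.
  by exists i; split.
have := (continuousP _).1 gc _ oU0.
rewrite gE => h; apply: (Km_nclosed (m := i)); rewrite -openC; exact: h.
Qed.
End T1neg.

Definition PX (X : topologicalType) (x0 : X) : Type := X.
HB.instance Definition _ (X : topologicalType) (x0 : X) := Topological.copy (PX x0) X.
HB.instance Definition _ (X : topologicalType) (x0 : X) := isPointed.Build (PX x0) x0.
Lemma compact_coverX (X : topologicalType) : compact [set: X] -> cover_compact [set: X].
Proof.
move=> cX.
have [x0|X0] := pselect (exists x : X, True).
- case: x0 => x0 _.
  have : compact [set: PX x0] by exact: cX.
  rewrite compact_cover; exact.
- move=> I D f _ _; exists finmap.fset0 => // x; exfalso; apply: X0; by exists x.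
Qed.

Lemma comp_cont (A B D : topologicalType) (f : A -> B) (g : B -> D) :
  continuous f -> continuous g -> continuous (g \o f).
Proof.
move=> /continuousP cf /continuousP cg; apply: contP => O oO.
exact: cf _ (cg _ oO).
Qed.

Lemma In_mem (T : eqType) (x : T) (s : seq T) : x \in s -> List.In x s.
Proof.
elim: s => //= a s IH; rewrite inE => /orP [/eqP ->|/IH]; [by left|by right].
Qed.

Lemma haus_sep (T : topologicalType) : hausdorff_space T ->
  forall x y : T, x <> y -> exists A B : set T,
     [/\ open A, open B, A x, B y & forall w, A w -> B w -> False].
Proof.
rewrite open_hausdorff => H x y /eqP /H [[A B] /= [xA yB] [oA oB AB0]].
exists A, B; split => //; rewrite ?inE in xA yB => //.
move=> w Aw Bw; move/eqP : AB0 => AB0.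
by have : (A `&` B) w by []; rewrite AB0.
Qed.

(* the concrete colimit of a directed diagram of injections *)
Section UC.
Variables (I : Type) (le : I -> I -> Prop) (Z : I -> topologicalType)
  (z : forall i j, le i j -> Z i -> Z j).
Hypothesis dp : directed_poset le.
Hypothesis Hid : forall i (h : le i i), z h = id.
Hypothesis Hcomp : forall i j k (h1 : le i j) (h2 : le j k) (h3 : le i k),
  z h2 \o z h1 = z h3.
Hypothesis Hinj : forall i j (h : le i j), injective (z h).
Hypothesis Hcont : forall i j (h : le i j), continuous (z h).

Let lrefl i : le i i. Proof. by case: dp. Qed.
Let ltrans i j k : le i j -> le j k -> le i k. Proof. by case: dp => _ _ t _; exact: t. Qed.
Let ub2 i j : exists k, le i k /\ le j k.
Proof.
case: dp => _ _ _ /(_ [:: i; j]) [k Hk]; exists k; split; apply: Hk => /=; auto.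
Qed.

Let zpi i k (h1 h2 : le i k) : z h1 = z h2.
Proof.
by have := Hcomp h1 (lrefl k) h2; rewrite Hid.
Qed.

Definition UP := {i : I & Z i}.
Definition Rel (p q : UP) : Prop := exists k (h1 : le (projT1 p) k) (h2 : le (projT1 q) k),
  z h1 (projT2 p) = z h2 (projT2 q).

Let Rel_refl p : Rel p p.
Proof. by exists (projT1 p), (lrefl _), (lrefl _). Qed.
Let Rel_sym p q : Rel p q -> Rel q p.
Proof. by move=> [k [h1 [h2 E]]]; exists k, h2, h1. Qed.
Let Rel_trans p q r : Rel p q -> Rel q r -> Rel p r.
Proof.
move=> [k [h1 [h2 E]]] [k' [h1' [h2' E']]].
have [m [hk hk']] := ub2 k k'.
exists m, (ltrans h1 hk), (ltrans h2' hk').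
have e1 := congr1 (fun g => g (projT2 p)) (Hcomp h1 hk (ltrans h1 hk)).
have e2 := congr1 (fun g => g (projT2 r)) (Hcomp h2' hk' (ltrans h2' hk')).
have e3 := congr1 (fun g => g (projT2 q)) (Hcomp h2 hk (ltrans h2 hk)).
have e4 := congr1 (fun g => g (projT2 q)) (Hcomp h1' hk' (ltrans h2 hk)).
simpl in e1, e2, e3, e4.
by rewrite -e1 -e2 E -E' e3 e4.
Qed.

Let Rel_same i a b : Rel (existT _ i a) (existT _ i b) -> a = b.
Proof.
move=> [k [h1 [h2 /= E]]]; apply: (@Hinj _ _ h1).
rewrite E; exact: (congr1 (fun g => g b) (zpi h2 h1)).
Qed.

Let Rel_z i j (h : le i j) a : Rel (existT _ j (z h a)) (existT _ i a).
Proof. by exists j, (lrefl j), h => /=; rewrite Hid. Qed.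

Definition UQ := {S : set UP | exists p, S = Rel p}.
Definition cl (p : UP) : UQ := exist _ (Rel p) (ex_intro _ p erefl).

Let cl_eq p q : cl p = cl q <-> Rel p q.
Proof.
split.
- move=> E; have : sval (cl p) q = sval (cl q) q by rewrite E.
  by move=> /= ->; exact: Rel_refl.
- move=> pq; apply: sig_eq => /=; apply: funext => r; apply: propext; split.
  + by move=> pr; apply: Rel_trans pr; exact: Rel_sym.
  + by move=> qr; apply: Rel_trans qr.
Qed.

Let cl_surj (w : UQ) : exists p, w = cl p.
Proof. by case: w => S [p E]; exists p; apply: sig_eq. Qed.

Definition dd i (a : Z i) : UQ := cl (existT _ i a).
Arguments dd : clear implicits.
Definition opU (S : set UQ) := forall i, open (dd i @^-1` S).

Lemma opUax : topax opU.
Proof.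
split.
- by move=> i; exact: openT.
- by move=> A B oA oB i; rewrite preimage_setI; apply: openI.
- move=> J f hf i; rewrite preimage_bigcup; apply: bigcup_open => j _; exact: hf.
Qed.

Definition UT := mkTop opUax.
Lemma UT_openP (S : set UT) : open S <-> opU S.
Proof. by []. Qed.

Lemma dd_cont i : continuous (dd i : Z i -> UT).
Proof. by apply: contP => A oA; exact: oA. Qed.

Lemma dd_z i j (h : le i j) : (dd j : Z j -> UT) \o z h = dd i.
Proof. by apply: funext => a /=; apply/cl_eq; exact: Rel_z. Qed.

Lemma dd_inj i : injective (dd i).
Proof. by move=> a b /cl_eq; exact: Rel_same. Qed.

Lemma dd_surj (w : UT) : exists i a, w = dd i a.
Proof. by have [[i a] ->] := cl_surj w; exists i, a. Qed.

Lemma dd_eq i j a b : dd i a = dd j b ->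
  exists k (h1 : le i k) (h2 : le j k), z h1 a = z h2 b.
Proof. by move/cl_eq. Qed.

Lemma dd_common (w1 w2 : UT) : exists k a b, w1 = dd k a /\ w2 = dd k b.
Proof.
have [i [a ->]] := dd_surj w1; have [j [b ->]] := dd_surj w2.
have [k [ik jk]] := ub2 i j.
exists k, (z ik a), (z jk b).
by rewrite -(dd_z ik) -(dd_z jk).
Qed.

Lemma UT_univ (V : topologicalType) (e : forall i, Z i -> V) :
  (forall i, continuous (e i)) -> (forall i j (h : le i j), e j \o z h = e i) ->
  exists u : UT -> V, continuous u /\ forall i, u \o dd i = e i.
Proof.
move=> ec ez.
have wd i j a b : dd i a = dd j b -> e i a = e j b.
  move=> /dd_eq [k [h1 [h2 E]]].
  by rewrite -(ez _ _ h1) -(ez _ _ h2) /= E.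
pose pk (w : UT) := cid (dd_surj w).
pose pa (w : UT) := cid (svalP (pk w)).
pose u (w : UT) := e (sval (pk w)) (sval (pa w)).
have ud i a : u (dd i a) = e i a.
  by rewrite /u; apply: wd; rewrite -(svalP (pa (dd i a))).
exists u; split.
- apply: contP => O oO; apply/UT_openP => i.
  have -> : dd i @^-1` (u @^-1` O) = e i @^-1` O.
    by apply/seteqP; split => a /=; rewrite ud.
  by move/continuousP : (ec i); apply.
- by move=> i; apply: funext => a /=; exact: ud.
Qed.

Lemma UT_uniq (V : Type) (u u' : UT -> V) :
  (forall i a, u (dd i a) = u' (dd i a)) -> u = u'.
Proof. by move=> H; apply: funext => w; have [i [a ->]] := dd_surj w; exact: H. Qed.

Lemma dd_open (Hop : forall i j (h : le i j) (O : set (Z i)), open O -> open (z h @` O))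
  k (O : set (Z k)) : open O -> open ((dd k : Z k -> UT) @` O).
Proof.
move=> oO; apply/UT_openP => l; apply: open_local => y [a Oa /esym /dd_eq [m [h1 [h2 E]]]].
exists (z h1 @^-1` (z h2 @` O)); split.
- by move/continuousP : (@Hcont _ _ h1); apply; exact: Hop.
- by rewrite /= E; exists a.
- move=> y' /= [a' Oa' E']; exists a' => //.
  by rewrite -(dd_z h2) -(dd_z h1) /= E'.
Qed.

Lemma UT_obj_open C (Hop : forall i j (h : le i j) (O : set (Z i)), open O -> open (z h @` O)) :
  (forall i, obj C (Z i)) -> obj C UT.
Proof.
move=> oZ; case: C oZ => //= oZ.
- apply: haus_of => w1 w2 ne.
  have [k [a [b [E1 E2]]]] := dd_common w1 w2; subst w1 w2.
  have ab : a <> b by move=> E; apply: ne; rewrite E.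
  have [A [B [oA oB Aa Bb AB]]] := haus_sep (oZ k) ab.
  exists ((dd k : Z k -> UT) @` A), ((dd k : Z k -> UT) @` B); split.
  + exact: dd_open.
  + exact: dd_open.
  + by exists a.
  + by exists b.
  + by move=> w [a' Aa' <-] [b' Bb' /dd_inj E]; apply: (AB a') => //; rewrite -E.
- move=> w1 w2 ne.
  have [k [a [b [E1 E2]]]] := dd_common w1 w2; subst w1 w2.
  have ab : a != b by apply: contra ne => /eqP ->.
  have [A [oA aA bA]] := oZ k _ _ ab.
  exists ((dd k : Z k -> UT) @` A); split.
  + exact: dd_open.
  + by rewrite inE; exists a => //; rewrite inE in aA.
  + rewrite inE => -[a' Aa' /dd_inj E]; move: bA; rewrite inE; apply.
    by rewrite -E.
- apply: kolmo_of => w1 w2 ne.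
  have [k [a [b [E1 E2]]]] := dd_common w1 w2; subst w1 w2.
  have ab : a != b by apply/eqP => E; apply: ne; rewrite E.
  have [A [[nA nB]|[nA nB]]] := oZ k _ _ ab; rewrite !inE in nA nB.
  + have [A' [oA' Aa AA]] := open_nbhsP nA.
    exists ((dd k : Z k -> UT) @` A'); split; first exact: dd_open.
    left; split; first by exists a.
    by move=> [b' /AA Ab' /dd_inj E]; apply: nB; rewrite -E.
  + have [A' [oA' Aa AA]] := open_nbhsP nA.
    exists ((dd k : Z k -> UT) @` A'); split; first exact: dd_open.
    right; split; first by exists b.
    by move=> [a' /AA Aa' /dd_inj E]; apply: nB; rewrite -E.
Qed.

Lemma UT_obj_T1 : (forall i, accessible_space (Z i)) -> accessible_space UT.
Proof.
move=> oZ w1 w2 ne; exists (~` [set w2]); split.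
- apply/UT_openP => l; rewrite openC.
  have [[b Eb]|nb] := pselect (exists b, dd l b = w2).
  + apply: (list_closed (oZ l) (F := [:: b])) => x /= Ex; left.
    by apply: (@dd_inj l); rewrite Ex Eb.
  + by apply: (list_closed (oZ l) (F := [::])) => x /= Ex; apply: nb; exists x.
- by rewrite inE => E; move: ne; rewrite E eqxx.
- by rewrite inE /= => h; apply: h.
Qed.

Lemma UT_iso C (W : topologicalType) (c : forall i, Z i -> W) :
  is_colimit C z c -> obj C UT ->
  exists (u : W -> UT) (v : UT -> W),
    [/\ continuous u, (forall i, u \o c i = dd i), (forall i, v \o dd i = c i),
        (forall w, v (u w) = w) & (forall q, u (v q) = q)].
Proof.
move=> [oW cc cz Hu] oU.
have [u [[uc Huc] Huu]] := Hu _ oU dd dd_cont dd_z.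
have [v [vc Hvd]] := UT_univ cc cz.
have [i0 [[ic Hic] Hiu]] := Hu _ oW c cc cz.
have vu : v \o u = id.
  have P1 : continuous (v \o u) /\ (forall i, (v \o u) \o c i = c i).
    split; first exact: comp_cont.
    by move=> i; rewrite -compA Huc Hvd.
  have P2 : continuous (@id W) /\ (forall i, id \o c i = c i).
    by split => //; apply: contP.
  by rewrite -(Hiu _ P1) (Hiu _ P2).
exists u, v; split => //.
- by move=> w; have := congr1 (fun g => g w) vu.
- move=> q.
  have E : u \o v = id.
    apply: UT_uniq => i a /=.
    have e1 := congr1 (fun g => g a) (Hvd i); simpl in e1; rewrite e1.
    by have e2 := congr1 (fun g => g a) (Huc i); simpl in e2; rewrite e2.
  by have := congr1 (fun g => g q) E.
Qed.


Lemma UC_fg C (W : topologicalType) (c : forall i, Z i -> W) (X : topologicalType) :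
  is_colimit C z c -> obj C UT ->
  (forall h : X -> UT, continuous h ->
     exists k (g : X -> Z k), continuous g /\ forall x, h x = dd k (g x)) ->
  fg_condition z c X.
Proof.
move=> Hcol oU Hex.
have [u [v [uc Huc Hvd vu uv]]] := UT_iso Hcol oU.
move=> f fc; split.
- have [k [g [gc Hg]]] := Hex (u \o f) (comp_cont fc uc).
  exists k, g; split => //; apply: funext => x /=.
  rewrite -[LHS]vu; have := Hg x; rewrite /= => ->.
  exact: (congr1 (fun F => F (g x)) (Hvd k)).
- move=> i g g' gc gc' E1 E2; exists i, (lrefl i); rewrite Hid.
  apply: funext => x; apply: (@dd_inj i).
  have e1 := congr1 (fun h => h (g x)) (Huc i); have e2 := congr1 (fun h => h (g' x)) (Huc i).
  simpl in e1, e2; rewrite -e1 -e2.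
  by have := congr1 (fun h => u (h x)) E1; have := congr1 (fun h => u (h x)) E2; simpl => <- <-.
Qed.

Lemma fg_open C (W : topologicalType) (c : forall i, Z i -> W) (X : topologicalType) :
  (forall i j (h : le i j) (O : set (Z i)), open O -> open (z h @` O)) ->
  (forall i, obj C (Z i)) -> compact [set: X] -> is_colimit C z c ->
  fg_condition z c X.
Proof.
move=> Hop oZ cX Hcol; apply: UC_fg Hcol (UT_obj_open Hop oZ) _ => h hc.
pose ix x := sval (cid (dd_surj (h x))).
have ixP x : exists a, h x = dd (ix x) a := svalP (cid (dd_surj (h x))).
pose F (x : X) : set X := h @^-1` (dd (ix x) @` setT).
have Fo x : setT x -> open (F x).
  move=> _; move/continuousP : hc; apply; apply: dd_open => //; exact: openT.
have Fc : [set: X] `<=` cover [set: X] F.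
  by move=> x _; exists x => //; have [a Ea] := ixP x; rewrite /F /= Ea; exists a.
have [D' _ HD'] := compact_coverX cX Fo Fc.
case: dp => _ _ _ /(_ (map ix (finmap.enum_fset D'))) [k Hk].
have Hb x : exists b, h x = dd k b.
  have [x' x'D [a _ Ea]] := HD' x Logic.I.
  have lk : le (ix x') k.
    by apply: Hk; apply: List.in_map; apply: In_mem.
  exists (z lk a); rewrite -Ea.
  by have := congr1 (fun g => g a) (dd_z lk).
pose g x := sval (cid (Hb x)).
have Hg x : h x = dd k (g x) := svalP (cid (Hb x)).
exists k, g; split => //.
apply: contP => O oO.
have -> : g @^-1` O = h @^-1` (dd k @` O).
  apply/seteqP; split => x /=.
  - by move=> Ogx; rewrite Hg; exists (g x).
  - by move=> [a Oa Ea]; rewrite Hg in Ea; rewrite -(dd_inj Ea).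
by move/continuousP : hc; apply; exact: dd_open.
Qed.

Lemma fg_fin C (W : topologicalType) (c : forall i, Z i -> W) (X : topologicalType) :
  obj C UT -> (forall A : set X, open A) -> (exists s : seq X, forall x, List.In x s) ->
  is_colimit C z c -> fg_condition z c X.
Proof.
move=> oU Xd [s Hs] Hcol; apply: UC_fg Hcol oU _ => h hc.
pose ix x := sval (cid (dd_surj (h x))).
have ixP x : exists a, h x = dd (ix x) a := svalP (cid (dd_surj (h x))).
case: dp => _ _ _ /(_ (map ix s)) [k Hk].
have Hb x : exists b, h x = dd k b.
  have [a Ea] := ixP x.
  have lk : le (ix x) k by apply: Hk; apply: List.in_map.
  exists (z lk a); rewrite Ea.
  by have := congr1 (fun g => g a) (dd_z lk).
pose g x := sval (cid (Hb x)).
have Hg x : h x = dd k (g x) := svalP (cid (Hb x)).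
exists k, g; split => //.
by apply: contP => O oO; exact: Xd.
Qed.

End UC.

Section WO.
Variable T : Type.
Definition SX : Type := set T.
HB.instance Definition _ := gen_eqMixin SX.
Definition RR : rel SX := sval (wochoice.well_ordering_principle SX).
Lemma RR_wo : wochoice.well_order RR.
Proof. exact: (svalP (wochoice.well_ordering_principle SX)). Qed.
Lemma RR_minU (P : set SX) : (exists x, P x) ->
  exists m, (P m /\ forall y, P y -> RR m y) /\
    forall m', (P m' /\ forall y, P y -> RR m' y) -> m = m'.
Proof.
move=> [x Px].
have [m [[mA mlow] U]] := @RR_wo (fun y => `[< P y >]) (ex_intro _ x (introT (asboolP _) Px)).
exists m; split.
- split; first by move: mA => /asboolP.
  by move=> y Py; apply: mlow; apply/asboolP.
- move=> m' [Pm' low']; apply: U; split; first by apply/asboolP.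
  by move=> y /asboolP; exact: low'.
Qed.
Lemma RR_min (P : set SX) : (exists x, P x) -> exists m, P m /\ forall y, P y -> RR m y.
Proof. by move=> /RR_minU [m [H _]]; exists m. Qed.
Lemma RR_refl x : RR x x.
Proof. by have [m [-> H]] := @RR_min (fun y => y = x) (ex_intro _ x erefl); exact: H. Qed.
Lemma RR_total x y : RR x y \/ RR y x.
Proof.
have [m [[->|->] H]] := @RR_min (fun w => w = x \/ w = y) (ex_intro _ x (or_introl erefl)).
- by left; apply: H; right.
- by right; apply: H; left.
Qed.
Lemma RR_anti x y : RR x y -> RR y x -> x = y.
Proof.
move=> xy yx.
have [m [_ U]] := @RR_minU (fun w => w = x \/ w = y) (ex_intro _ x (or_introl erefl)).
have Ex : m = x.
  by apply: U; split; [left|move=> w [->|->] //; exact: RR_refl].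
have Ey : m = y.
  by apply: U; split; [right|move=> w [->|->] //; exact: RR_refl].
by rewrite -Ex Ey.
Qed.
Lemma RR_trans x y w : RR x y -> RR y w -> RR x w.
Proof.
move=> xy yw.
have [m [[->|[->|->]] H]] := @RR_min (fun v => v = x \/ v = y \/ v = w)
  (ex_intro _ x (or_introl erefl)).
- by apply: H; right; right.
- by rewrite (RR_anti xy (H x (or_introl erefl))).
- by rewrite -(RR_anti yw (H y (or_intror (or_introl erefl)))).
Qed.
Definition ltR x y := RR x y /\ x <> y.
Lemma le_ltR x y w : RR x y -> ltR y w -> ltR x w.
Proof.
move=> xy [yw ne]; split; first exact: RR_trans xy yw.
by move=> E; apply: ne; rewrite E in xy; exact: RR_anti.
Qed.
Lemma ltR_le x y w : ltR x y -> RR y w -> ltR x w.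
Proof.
move=> [xy ne] yw; split; first exact: RR_trans xy yw.
by move=> E; apply: ne; rewrite -E in yw; exact: RR_anti.
Qed.
Lemma not_ltR x y : ~ ltR x y -> RR y x.
Proof.
move=> H; have [xy|//] := RR_total x y.
have [E|ne] := pselect (x = y); first by rewrite E; exact: RR_refl.
by exfalso; apply: H.
Qed.
End WO.

Lemma wf_min (T : Type) (r : T -> T -> Prop) :
  (forall P : set T, (exists x, P x) -> exists m, P m /\ forall y, P y -> ~ r y m) ->
  well_founded r.
Proof.
move=> H x; apply: contrapT => nx.
have [m [Pm Hm]] := H (fun y => ~ Acc r y) (ex_intro _ x nx).
apply: Pm; constructor => y rym; apply: contrapT => ny; exact: Hm y ny rym.
Qed.

Module NFL.
Import finmap.
Local Open Scope fset_scope.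
Lemma list_fset (X : Type) (I : choiceType) (D : set I) (f : I -> set X) (l : seq (set X)) :
  (forall O, List.In O l -> exists2 i, D i & f i = O) ->
  exists D' : {fset I}, {subset D' <= D} /\
    forall O, List.In O l -> exists2 i, i \in D' & f i = O.
Proof.
elim: l => [|O l IH] H.
- by exists fset0; split => // i; rewrite in_fset0.
- have [D' [sD HD']] := IH (fun O' h => H O' (or_intror h)).
  have [i Di Ei] := H O (or_introl erefl).
  exists (i |` D'); split.
  + move=> j; rewrite in_fset1U => /orP [/eqP ->|/sD //]; exact: mem_set.
  + move=> O' [<-|/HD' [j jD' Ej]].
    * by exists i => //; rewrite in_fset1U eqxx.
    * by exists j => //; rewrite in_fset1U jD' orbT.
Qed.
End NFL.

Lemma cover_compactX (X : topologicalType) : cover_compact [set: X] -> compact [set: X].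
Proof.
move=> cX.
have [x0|X0] := pselect (exists x : X, True).
- case: x0 => x0 _.
  suff : compact [set: PX x0] by [].
  by rewrite compact_cover.
- have -> : [set: X] = set0 by apply/seteqP; split => // x; exfalso; apply: X0; exists x.
  exact: compact0.
Qed.

Section ZornC.
Variables (C : spcat) (M : morclass) (X : topologicalType).
Hypothesis hX : obj C X.
Hypothesis HM : forall (A B : topologicalType) (f : A -> B), open_embedding f -> @M A B f.
Variable V : set (set X).
Hypothesis Vo : forall O, V O -> open O.
Hypothesis Vc : forall x, exists O, V O /\ O x.
Hypothesis Vnf : forall l : seq (set X), (forall O, List.In O l -> V O) ->
  ~ (forall x, exists O, List.In O l /\ O x).

Definition Blw (lam : option (SX X)) (O : SX X) : Prop :=
  V O /\ (if lam is Some L then ltR O L else True).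
Definition Aat lam : set X := \bigcup_(O in Blw lam) O.
Definition Good lam := exists l : seq (set X), (forall O, List.In O l -> V O) /\
  forall x, Aat lam x \/ exists O, List.In O l /\ O x.

Lemma lam_ex : exists lam, Good lam /\ forall O, Blw lam O -> ~ Good (Some O).
Proof.
have [h|h] := pselect (exists L : SX X, V L /\ Good (Some L)).
- have [m [[Vm Gm] mlow]] := RR_min h.
  exists (Some m); split => // O [VO [Om ne]] GO.
  by apply: ne; exact: (RR_anti Om (mlow O (conj VO GO))).
- exists None; split.
  + exists [::]; split => // x; left.
    by have [O [VO Ox]] := Vc x; exists O.
  + by move=> O [VO _] GO; apply: h; exists O.
Qed.

Lemma Blw_trans lam O P : V O -> ltR O P -> Blw lam P -> Blw lam O.
Proof.
move=> VO OP [VP HP]; split => //; case: lam HP => [L|] // PL.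
exact: le_ltR (proj1 OP) PL.
Qed.

Section ZornI.
Variable lam : option (SX X).
Variable lG : seq (set X).
Hypothesis lGV : forall O, List.In O lG -> V O.
Hypothesis HG : forall x, Aat lam x \/ exists O, List.In O lG /\ O x.
Hypothesis Hmin : forall O, Blw lam O -> ~ Good (Some O).

Definition Gs : set X := fun x => exists O, List.In O lG /\ O x.
Definition Ix := {O : SX X | Blw lam O}.
Definition ile (a b : Ix) : Prop := RR (sval a) (sval b).
Definition SA (a : Ix) : set X := Aat (Some (sval a)) `|` Gs.
Definition ZZ (a : Ix) : topologicalType := SubT (SA a).

Lemma SA_mono (a b : Ix) : ile a b -> SA a `<=` SA b.
Proof.
move=> ab x [[O [VO Oa] Ox]|Gx]; last by right.
by left; exists O => //; split => //; exact: ltR_le Oa ab.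
Qed.

Definition zz (a b : Ix) (h : ile a b) : ZZ a -> ZZ b := incl (SA_mono h).

Lemma Gs_open : open Gs.
Proof.
apply: open_local => x [O [Ol Ox]]; exists O; split => //.
- exact: Vo (lGV Ol).
- by move=> y Oy; exists O.
Qed.

Lemma SA_open a : open (SA a).
Proof.
apply: openU; last exact: Gs_open.
by apply: bigcup_open => O [VO _]; exact: Vo.
Qed.

Lemma SA_proper a : ~ (forall x, SA a x).
Proof.
move=> H; apply: (Hmin (svalP a)); exists lG; split; first exact: lGV.
by move=> x; case: (H x) => h; [left|right].
Qed.

Lemma Ix_ne : exists a : Ix, True.
Proof.
apply: contrapT => H; apply: (Vnf lGV) => x.
case: (HG x) => // -[O BO Ox]; exfalso; apply: H.
by exists (exist _ O BO).
Qed.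

Lemma Ix_nomax (a : Ix) : exists b : Ix, ltR (sval a) (sval b).
Proof.
apply: contrapT => H.
have Hb (b : Ix) : RR (sval b) (sval a).
  by apply: not_ltR => h; apply: H; exists b.
apply: (Hmin (svalP a)); exists (sval a :: lG); split.
- by move=> O [<-|/lGV] //; case: (svalP a).
- move=> x; case: (HG x) => [[O BO Ox]|[O [Ol Ox]]].
  + have Oa := Hb (exist _ O BO); simpl in Oa.
    have [E|ne] := pselect (O = sval a).
    * by right; exists (sval a); split; [left|rewrite -E].
    * left; exists O => //; split; first exact: (proj1 BO).
      by split.
  + by right; exists O; split => //; right.
Qed.

Lemma SA_cover x : exists a : Ix, SA a x.
Proof.
case: (HG x) => [[O BO Ox]|Gx].
- have [b [Ob ne]] := Ix_nomax (exist _ O BO).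
  exists b; left; exists O => //; split; first exact: (proj1 BO).
  by split.
- by have [a _] := Ix_ne; exists a; right.
Qed.

Lemma strict_ltR (a b : Ix) : strict ile a b <-> ltR (sval a) (sval b).
Proof.
split.
- by move=> [ab ne]; split => // E; apply: ne; exact: sig_eq.
- by move=> [ab ne]; split => // E; apply: ne; rewrite E.
Qed.

Lemma SA_limit (j : Ix) : is_limit_elt ile j ->
  forall x, SA j x -> exists a : Ix, strict ile a j /\ SA a x.
Proof.
move=> [[i0 si0] Hlim] x [[O [VO Oj] Ox]|Gx]; last by exists i0; split => //; right.
have BO : Blw lam O by apply: Blw_trans VO Oj (svalP j).
have sj : strict ile (exist _ O BO) j by apply/strict_ltR.
have [k [sk1 sk2]] := Hlim _ sj.
exists k; split => //; left; exists O => //; split => //.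
by apply/(strict_ltR (exist _ O BO) k).
Qed.

Lemma ile_lot : limit_ordinal_type ile.
Proof.
split; first by move=> a; exact: RR_refl.
split; first by move=> a b ab ba; apply: sig_eq; exact: RR_anti.
split; first by move=> a b c; exact: RR_trans.
split; first by move=> a b; exact: RR_total.
split.
  apply: wf_min => P [x Px].
  have [m [[a [<- Pa]] Hm]] := @RR_min X (fun O => exists a : Ix, sval a = O /\ P a)
    (ex_intro _ (sval x) (ex_intro _ x (conj erefl Px))).
  exists a; split => // y Py [ya ne]; apply: ne; apply: sig_eq; apply: RR_anti ya _.
  by apply: Hm; exists y.
split; first by have [a _] := Ix_ne; exists a.
move=> a; have [b ab] := Ix_nomax a; exists b; exact/strict_ltR.
Qed.

Lemma zz_diag : diagram C M zz.
Proof.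
split.
- by move=> a; exact: obj_SubT.
- move=> a b h; split; first exact: incl_cont.
  by apply: HM; apply: incl_oe; exact: SA_open.
- by move=> a h; apply: funext => p; apply: sig_eq.
- by move=> a b c h1 h2 h3; apply: funext => p; apply: sig_eq.
Qed.

Lemma zz_cc : continuous_chain C zz.
Proof.
move=> j lj; apply: glue.
- exact: obj_SubT.
- by move=> a; exact: incl_cont.
- by move=> a b h; apply: funext => p; apply: sig_eq.
- by move=> a O oO; apply: incl_open => //; exact: SA_open.
- move=> [x Hx]; have [a [sa Ha]] := SA_limit lj Hx.
  exists (exist _ a sa), (exist _ x Ha); exact: sig_eq.
- move=> a b p q E.
  have E' : sval p = sval q by have := congr1 sval E.
  have [ab|ba] := RR_total (sval (sval a)) (sval (sval b)).
  + exists b, ab, (RR_refl _); exact: sig_eq.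
  + exists a, (RR_refl _), ba; exact: sig_eq.
Qed.

Lemma zz_colim : is_colimit C zz (fun a (p : ZZ a) => sval p).
Proof.
apply: glue.
- exact: hX.
- by move=> a; exact: sval_cont.
- by move=> a b h; apply: funext => p.
- by move=> a O oO; apply: sval_open => //; exact: SA_open.
- move=> x; have [a Ha] := SA_cover x.
  by exists a, (exist _ x Ha).
- move=> a b p q E.
  have [ab|ba] := RR_total (sval a) (sval b).
  + exists b, ab, (RR_refl _); exact: sig_eq.
  + exists a, (RR_refl _), ba; exact: sig_eq.
Qed.

Lemma zorn_main : fin_small C M X -> False.
Proof.
move=> Hs.
have Hfg := Hs Ix ile ZZ zz X (fun a (p : ZZ a) => sval p) ile_lot zz_diag zz_cc zz_colim.
have ci : continuous (fun x : X => x) by apply: contP.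
have [[i [g [gc E]]] _] := Hfg _ ci.
apply: (SA_proper (a := i)) => x.
have -> : x = sval (g x) by have := congr1 (fun F => F x) E.
exact: (svalP (g x)).
Qed.
End ZornI.

Lemma zorn_false : fin_small C M X -> False.
Proof.
move=> Hs; have [lam [[lG [lGV HG]] Hmin]] := lam_ex.
exact: (zorn_main lGV HG Hmin Hs).
Qed.
End ZornC.

Lemma zorn_neg C M (X : topologicalType) : obj C X ->
  (forall (A B : topologicalType) (f : A -> B), open_embedding f -> M A B f) ->
  fin_small C M X -> compact [set: X].
Proof.
move=> hX HM Hs; apply: contrapT => ncX.
have : ~ cover_compact [set: X] by move=> /cover_compactX.
move=> /existsNP [I /existsNP [D /existsNP [f /not_implyP [fo /not_implyP [fc nfin]]]]].
pose V : set (set X) := [set f i | i in D].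
apply: (@zorn_false C M X hX HM V) => //.
- by move=> O [i Di <-]; exact: fo.
- by move=> x; have [i Di fx] := fc x Logic.I; exists (f i); split => //; exists i.
- move=> l lV Hl; apply: nfin.
  have [D' [sD HD']] := NFL.list_fset (fun O h => lV O h).
  exists D' => // x _; have [O [Ol Ox]] := Hl x.
  have [i iD Ei] := HD' O Ol.
  by exists i => //; rewrite Ei.
Qed.

Lemma pos_open C (X : topologicalType) : compact [set: X] -> fin_generated C open_embedding X.
Proof.
move=> cX I le Z z W c dp [oZ Hz Hid Hcomp] Hcol.
have Hinj i j h : injective (z i j h) by case: (Hz i j h) => _ [].
have Hcont i j h : continuous (z i j h) by case: (Hz i j h).
have Hop i j h (O : set (Z i)) : open O -> open (z i j h @` O).
  by case: (Hz i j h) => _ [_ _]; apply.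
exact: (fg_open dp Hid Hcomp Hinj Hcont Hop oZ cX Hcol).
Qed.

Lemma pos_mono C (X : topologicalType) : (C = TopC \/ C = Top1C) ->
  (forall A : set X, open A) -> (exists s : seq X, forall x, List.In x s) ->
  fin_generated C (mono C) X.
Proof.
move=> HC Xd Xf I le Z z W c dp [oZ Hz Hid Hcomp] Hcol.
have Hinj i j h : injective (z i j h) by case: (Hz i j h) => _ /mono_inj.
have oU : obj C (UT z).
  case: HC oZ => -> oZ //=.
  exact: (UT_obj_T1 dp Hid Hcomp Hinj oZ).
exact: (fg_fin dp Hid Hcomp Hinj oU Xd Xf Hcol).
Qed.

Lemma cd_finite (X : topologicalType) : compact [set: X] -> (forall A : set X, open A) ->
  exists s : seq X, forall x, List.In x s.
Proof.
move=> cX Xd.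
have Fo (x : X) : setT x -> open [set x] by move=> _; exact: Xd.
have Fc : [set: X] `<=` cover [set: X] (fun x => [set x]) by move=> x _; exists x.
have [D' _ HD'] := compact_coverX cX Fo Fc.
exists (finmap.enum_fset D') => x.
have [x' x'D ->] := HD' x Logic.I.
exact: In_mem.
Qed.

Lemma t1_fin_disc (X : topologicalType) : accessible_space X ->
  (exists s : seq X, forall x, List.In x s) -> forall A : set X, open A.
Proof.
move=> T1 [s Hs] A; rewrite -closedC.
by apply: (list_closed T1 (F := s)) => x _; exact: Hs.
Qed.



Theorem corollary3p2 (C : spcat) (X : topologicalType) (hX : obj C X) :
  (fin_generated C (mono C) X <-> fin_small C (mono C) X) /\
  (fin_generated C open_embedding X <-> fin_small C open_embedding X).
Proof.
split.
- split; first exact: gen_small.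
  move=> Hs; case: C hX Hs => hX Hs.
  + have Xd : forall A : set X, open A.
      move=> A; have -> : A = \bigcup_(p in A) [set p].
        by apply/seteqP; split => [x Ax|x [p Ap ->]] //; exists x.
      by apply: bigcup_open => p _; exact: nd_fg.
    have cX := zorn_neg hX (fun A B f h => oe_mono _ h) Hs.
    exact: pos_mono (or_introl erefl) Xd (cd_finite cX Xd).
  + by apply: empty_gen => x; exact: haus_neg x Hs.
  + have cX := zorn_neg hX (fun A B f h => oe_mono _ h) Hs.
    have Xf : exists s : seq X, forall x, List.In x s.
      by apply: contrapT => Hinf; exact: t1_neg hX cX Hinf Hs.
    exact: pos_mono (or_intror erefl) (t1_fin_disc hX Xf) Xf.
  + by apply: empty_gen => x; exact: t0_neg x Hs.
- split; first exact: gen_small.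
  move=> Hs; apply: pos_open.
  exact: zorn_neg hX (fun A B f h => h) Hs.
Qed.
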